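(* Let $f$ be a derivation of a commutator semi-lattice $(X,\leq,\cdot)$. Then for all $a,b\in X$ and every non-negative integer $n$, $$f^n(a\cdot b)\leq \bigvee_{i=0}^n f^i(a)\cdot f^{n-i}(b),$$ where $f^0$ denotes the identity map.
   Context: A join semi-lattice is a poset $(X,\leq)$ with a binary operation $\vee$ that is idempotent, commutative and associative, such that $a\leq b \iff a\vee b=b$ for all $a,b\in X$. A commutator semi-lattice is a triple $(X,\leq,\cdot)$ where $(X,\leq,\vee)$ is a join semi-lattice and $\cdot$ is a binary operation on $X$ such that: $\cdot$ is commutative; $a\cdot b\leq b$ for all $a,b$; and $a\cdot(b\vee c)=(a\cdot b)\vee(a\cdot c)$ for all $a,b,c$. A derivation of a commutator semi-lattice is a map $f:X\to X$ preserving joins ($f(a\vee b)=f(a)\vee f(b)$) and satisfying $f(a\cdot b)\leq (f(a)\cdot b)\vee(a\cdot f(b))$ for all $a,b\in X$. *)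

(* Defs.v *)
From Stdlib Require Import Arith.

Record join_semilattice {X : Type} (le : X -> X -> Prop) (join : X -> X -> X)
  : Prop := {
  js_refl : forall a, le a a;
  js_antisym : forall a b, le a b -> le b a -> a = b;
  js_trans : forall a b c, le a b -> le b c -> le a c;
  js_idem : forall a, join a a = a;
  js_comm : forall a b, join a b = join b a;
  js_assoc : forall a b c, join a (join b c) = join (join a b) c;
  js_le_join : forall a b, le a b <-> join a b = b
}.

Record commutator_semilattice {X : Type} (le : X -> X -> Prop)
  (join : X -> X -> X) (dot : X -> X -> X) : Prop := {
  cs_js : join_semilattice le join;
  cs_dot_comm : forall a b, dot a b = dot b a;
  cs_dot_le : forall a b, le (dot a b) b;
  cs_dot_join : forall a b c, dot a (join b c) = join (dot a b) (dot a c)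
}.

Definition derivation {X : Type} (le : X -> X -> Prop)
  (join : X -> X -> X) (dot : X -> X -> X) (f : X -> X) : Prop :=
  (forall a b, f (join a b) = join (f a) (f b)) /\
  (forall a b, le (f (dot a b)) (join (dot (f a) b) (dot a (f b)))).

Definition fpow {X : Type} (f : X -> X) (n : nat) : X -> X := Nat.iter n f.

Fixpoint bigjoin {X : Type} (join : X -> X -> X) (F : nat -> X) (n : nat) : X :=
  match n with
  | 0 => F 0
  | S m => join (bigjoin join F m) (F (S m))
  end.

(* Main.v *)
Require Import Defs.
From Stdlib Require Import Arith Lia.

Section S.
Variables (X : Type) (le : X -> X -> Prop) (join : X -> X -> X).
Hypothesis H : join_semilattice le join.

Lemma le_joinl x y : le x (join x y).
Proof. apply (js_le_join _ _ H). rewrite (js_assoc _ _ H), (js_idem _ _ H). reflexivity. Qed.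
Lemma le_joinr x y : le y (join x y).
Proof. rewrite (js_comm _ _ H). apply le_joinl. Qed.
Lemma join_lub x y z : le x z -> le y z -> le (join x y) z.
Proof.
  intros Hx Hy. apply (js_le_join _ _ H) in Hx. apply (js_le_join _ _ H) in Hy.
  apply (js_le_join _ _ H). rewrite <- (js_assoc _ _ H), Hy, Hx. reflexivity.
Qed.
Lemma bigjoin_ub F n j : j <= n -> le (F j) (bigjoin join F n).
Proof.
  induction n; intros Hj; simpl.
  - replace j with 0 by lia. apply (js_refl _ _ H).
  - destruct (Nat.eq_dec j (S n)) as [->|Hne]. apply le_joinr.
    eapply (js_trans _ _ H). apply IHn; lia. apply le_joinl.
Qed.
Lemma bigjoin_lub F n c : (forall j, j <= n -> le (F j) c) -> le (bigjoin join F n) c.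
Proof.
  induction n; intros Hc; simpl. apply Hc; lia.
  apply join_lub. apply IHn; intros; apply Hc; lia. apply Hc; lia.
Qed.
Lemma mono_f (f : X -> X) : (forall a b, f (join a b) = join (f a) (f b)) ->
  forall x y, le x y -> le (f x) (f y).
Proof.
  intros Hf x y Hxy. apply (js_le_join _ _ H) in Hxy. apply (js_le_join _ _ H).
  rewrite <- Hf, Hxy. reflexivity.
Qed.
Lemma f_bigjoin (f : X -> X) : (forall a b, f (join a b) = join (f a) (f b)) ->
  forall F n, f (bigjoin join F n) = bigjoin join (fun i => f (F i)) n.
Proof. intros Hf F n; induction n; simpl; [reflexivity| rewrite Hf, IHn; reflexivity]. Qed.
End S.

Theorem proposition2p9 (X : Type) (le : X -> X -> Prop)
  (join dot : X -> X -> X) (f : X -> X) :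
  commutator_semilattice le join dot ->
  derivation le join dot f ->
  forall (a b : X) (n : nat),
    le (fpow f n (dot a b))
       (bigjoin join (fun i => dot (fpow f i a) (fpow f (n - i) b)) n).
Proof.
  intros HC [Hf Hd] a b n. pose proof (cs_js _ _ _ HC) as H.
  induction n.
  - simpl. apply (js_refl _ _ H).
  - change (fpow f (S n) (dot a b)) with (f (fpow f n (dot a b))).
    eapply (js_trans _ _ H). apply (mono_f _ _ _ H f Hf). apply IHn.
    rewrite (f_bigjoin _ _ f Hf). apply (bigjoin_lub _ _ _ H). intros j Hj.
    eapply (js_trans _ _ H). apply Hd. apply (join_lub _ _ _ H).
    + pose proof (bigjoin_ub _ _ _ H (fun i => dot (fpow f i a) (fpow f (S n - i) b)) (S n) (S j)) as U.
      simpl in U. replace (n - j) with (S n - S j) by lia. apply U; lia.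
    + pose proof (bigjoin_ub _ _ _ H (fun i => dot (fpow f i a) (fpow f (S n - i) b)) (S n) j) as U.
      simpl in U. change (f (fpow f (n - j) b)) with (fpow f (S (n - j)) b).
      replace (S (n - j)) with (S n - j) by lia. apply U; lia.
Qed.
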